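(* Let $X$ be a complete metric space, $\mathcal S=(X,(\phi_j)_{j=0}^{n-1})$ a Matkowski contractive GIFS of degree $m$ with attractor $A_{\mathcal S}$, and $u_{\mathcal Z}$ the fuzzy attractor of the GIFZS $\mathcal Z_{\mathcal S}=(X,(\phi_j)_{j=0}^{n-1},(\rho_j)_{j=0}^{n-1})$ (with $(\rho_j)$ admissible). Then for every nonempty compact $B\subseteq X$ and every $v\in\mathcal F_X^*$: (a) if $\mathcal Z_{\mathcal S}(v,\dots,v)\le v$ then $u_{\mathcal Z}\le v$; (b) if $\bigcup_j\phi_j(B\times\cdots\times B)\subseteq B$ then $A_{\mathcal S}\subseteq B$; (c) if $v\le\mathcal Z_{\mathcal S}(v,\dots,v)$ then $v\le u_{\mathcal Z}$; (d) if $B\subseteq\bigcup_j\phi_j(B\times\cdots\times B)$ then $B\subseteq A_{\mathcal S}$.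
   Context: A fuzzy subset of $X$ is $u:X\to[0,1]$; $u\le v$ means pointwise inequality. $\mathcal F_X^*$: fuzzy subsets that are normal, usc and compactly supported. $X^m$ has the maximum metric $d^m$. For $T:Z\to Y$, $T(u)(y)=\sup\{u(z):T(z)=y\}$ if $y\in T(Z)$, else $0$; $\rho(u)=\rho\circ u$; $(u_0\times\cdots\times u_{m-1})(x_0,\dots,x_{m-1})=\min_iu_i(x_i)$; $\vee$ is pointwise max. A family $(\rho_j)$ of maps $[0,1]\to[0,1]$ is admissible if each is nondecreasing, right continuous, $\rho_j(0)=0$, and $\rho_j(1)=1$ for some $j$. A GIFS of degree $m$ is $(X,(\phi_j))$ with continuous $\phi_j:X^m\to X$; it is Matkowski contractive if each $\phi_j$ satisfies $d(\phi_j(x),\phi_j(y))\le\varphi_j(d^m(x,y))$ for some nondecreasing $\varphi_j:[0,\infty)\to[0,\infty)$ with $\varphi_j^{(k)}(t)\to0$ for all $t>0$. For such $\mathcal S$ on complete $X$, its attractor $A_{\mathcal S}$ is the unique nonempty compact set with $A_{\mathcal S}=\bigcup_j\phi_j(A_{\mathcal S}\times\cdots\times A_{\mathcal S})$. The GIFZS operator is $\mathcal Z_{\mathcal S}(u_0,\dots,u_{m-1})=\bigvee_j\rho_j(\phi_j(u_0\times\cdots\times u_{m-1}))$ and the fuzzy attractor is the unique $u_{\mathcal Z}\in\mathcal F_X^*$ with $\mathcal Z_{\mathcal S}(u_{\mathcal Z},\dots,u_{\mathcal Z})=u_{\mathcal Z}$. *)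

(* Defs.v *)
From Stdlib Require Import Reals Lra Lia List Classical ClassicalEpsilon.
Open Scope R_scope.

Definition is_metric {X : Type} (d : X -> X -> R) : Prop :=
  (forall x y, 0 <= d x y) /\
  (forall x y, d x y = 0 <-> x = y) /\
  (forall x y, d x y = d y x) /\
  (forall x y z, d x z <= d x y + d y z).

Definition cauchy_seq {X : Type} (d : X -> X -> R) (s : nat -> X) : Prop :=
  forall eps, 0 < eps -> exists N, forall p q, (N <= p)%nat -> (N <= q)%nat ->
    d (s p) (s q) < eps.

Definition converges_to {X : Type} (d : X -> X -> R) (s : nat -> X) (l : X) : Prop :=
  forall eps, 0 < eps -> exists N, forall p, (N <= p)%nat -> d (s p) l < eps.

Definition mcomplete {X : Type} (d : X -> X -> R) : Prop :=
  forall s, cauchy_seq d s -> exists l, converges_to d s l.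

Definition open_set {X : Type} (d : X -> X -> R) (U : X -> Prop) : Prop :=
  forall x, U x -> exists r, 0 < r /\ forall y, d x y < r -> U y.

Definition mcompact {X : Type} (d : X -> X -> R) (K : X -> Prop) : Prop :=
  forall (I : Type) (U : I -> X -> Prop),
    (forall i, open_set d (U i)) ->
    (forall x, K x -> exists i, U i x) ->
    exists l : list I, forall x, K x -> exists i, In i l /\ U i x.

Definition nonempty {X : Type} (K : X -> Prop) : Prop := exists x, K x.

Definition mclosure {X : Type} (d : X -> X -> R) (S : X -> Prop) (x : X) : Prop :=
  forall eps, 0 < eps -> exists y, S y /\ d x y < eps.

Fixpoint tup (X : Type) (m : nat) : Type :=
  match m with O => unit | S k => (X * tup X k)%type end.

Fixpoint dmax {X : Type} (d : X -> X -> R) (m : nat) : tup X m -> tup X m -> R :=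
  match m with
  | O => fun _ _ => 0
  | S k => fun x y => Rmax (d (fst x) (fst y)) (dmax d k (snd x) (snd y))
  end.

Fixpoint tup_in {X : Type} (B : X -> Prop) (m : nat) : tup X m -> Prop :=
  match m with
  | O => fun _ => True
  | S k => fun t => B (fst t) /\ tup_in B k (snd t)
  end.

Definition fuzzy {X : Type} (u : X -> R) : Prop := forall x, 0 <= u x <= 1.

Definition fle {X : Type} (u v : X -> R) : Prop := forall x, u x <= v x.

Definition normal {X : Type} (u : X -> R) : Prop := exists x, u x = 1.

Definition usc {X : Type} (d : X -> X -> R) (u : X -> R) : Prop :=
  forall x eps, 0 < eps -> exists delta, 0 < delta /\
    forall y, d x y < delta -> u y < u x + eps.

Definition fsupport {X : Type} (d : X -> X -> R) (u : X -> R) : X -> Prop :=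
  mclosure d (fun x => 0 < u x).

Definition FX_star {X : Type} (d : X -> X -> R) (u : X -> R) : Prop :=
  fuzzy u /\ normal u /\ usc d u /\ mcompact d (fsupport d u).

(* supremum of a set of reals (meaningful when nonempty and bounded above) *)
Definition Rsup (E : R -> Prop) : R := epsilon (inhabits 0) (fun l => is_lub E l).

Definition zadeh {Z Y : Type} (T : Z -> Y) (u : Z -> R) (y : Y) : R :=
  match excluded_middle_informative (exists z, T z = y) with
  | left _ => Rsup (fun r => exists z, T z = y /\ r = u z)
  | right _ => 0
  end.

(* diagonal product u × ... × u  (m factors): t ↦ min_i u(t_i)
   (computed as min(u t_0, ..., u t_{m-1}, 1); the trailing 1 is harmless as u <= 1) *)
Fixpoint fprod_diag {X : Type} (u : X -> R) (m : nat) : tup X m -> R :=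
  match m with
  | O => fun _ => 1
  | S k => fun t => Rmin (u (fst t)) (fprod_diag u k (snd t))
  end.

(* finite pointwise maximum  \/_{j<n} f j (as max(0, f 0, ..., f (n-1)); the 0 is harmless for [0,1]-valued f) *)
Fixpoint bigmax {X : Type} (n : nat) (f : nat -> X -> R) (x : X) : R :=
  match n with
  | O => 0
  | S k => Rmax (bigmax k f x) (f k x)
  end.

Definition admissible (n : nat) (rho : nat -> R -> R) : Prop :=
  (forall j, (j < n)%nat ->
     (forall t, 0 <= t <= 1 -> 0 <= rho j t <= 1) /\
     (forall s t, 0 <= s -> s <= t -> t <= 1 -> rho j s <= rho j t) /\
     (forall t, 0 <= t < 1 -> forall eps, 0 < eps -> exists delta, 0 < delta /\
        forall s, t <= s <= 1 -> s < t + delta -> Rabs (rho j s - rho j t) < eps) /\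
     rho j 0 = 0) /\
  (exists j, (j < n)%nat /\ rho j 1 = 1).

Definition continuous_m {X : Type} (d : X -> X -> R) (m : nat) (f : tup X m -> X) : Prop :=
  forall t eps, 0 < eps -> exists delta, 0 < delta /\
    forall s, dmax d m t s < delta -> d (f t) (f s) < eps.

Definition matkowski_contraction {X : Type} (d : X -> X -> R) (m : nat)
  (f : tup X m -> X) : Prop :=
  exists varphi : R -> R,
    (forall t, 0 <= t -> 0 <= varphi t) /\
    (forall s t, 0 <= s -> s <= t -> varphi s <= varphi t) /\
    (forall t, 0 < t -> Un_cv (fun k => Nat.iter k varphi t) 0) /\
    (forall x y, d (f x) (f y) <= varphi (dmax d m x y)).

Definition matkowski_GIFS {X : Type} (d : X -> X -> R) (m n : nat)
  (phi : nat -> tup X m -> X) : Prop :=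
  forall j, (j < n)%nat -> continuous_m d m (phi j) /\ matkowski_contraction d m (phi j).

Definition hutchinson {X : Type} (m n : nat) (phi : nat -> tup X m -> X)
  (B : X -> Prop) (x : X) : Prop :=
  exists j t, (j < n)%nat /\ tup_in B m t /\ phi j t = x.

Definition Zop {X : Type} (m n : nat) (phi : nat -> tup X m -> X)
  (rho : nat -> R -> R) (v : X -> R) : X -> R :=
  bigmax n (fun j x => rho j (zadeh (phi j) (fprod_diag v m) x)).

Definition is_attractor {X : Type} (d : X -> X -> R) (m n : nat)
  (phi : nat -> tup X m -> X) (A : X -> Prop) : Prop :=
  nonempty A /\ mcompact d A /\ (forall x, A x <-> hutchinson m n phi A x).

Definition is_fuzzy_attractor {X : Type} (d : X -> X -> R) (m n : nat)
  (phi : nat -> tup X m -> X) (rho : nat -> R -> R) (u : X -> R) : Prop :=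
  FX_star d u /\ Zop m n phi rho u = u.

(* Main.v *)
Require Import Defs.
From Stdlib Require Import Reals.
From Stdlib Require Import Lra Lia List Classical ClassicalEpsilon.
Open Scope R_scope.

Lemma dmax_nonneg {X} (d : X -> X -> R) m (Hm : is_metric d) :
  forall x y, 0 <= dmax d m x y.
Proof.
  destruct Hm as [Hnn _]. induction m; simpl; intros. lra.
  eapply Rle_trans; [apply Hnn| apply Rmax_l].
Qed.

Lemma dmax_sym {X} (d : X -> X -> R) m (Hm : is_metric d) :
  forall x y, dmax d m x y = dmax d m y x.
Proof.
  destruct Hm as [_ [_ [Hs _]]]. induction m; simpl; intros. lra.
  rewrite Hs, IHm. reflexivity.
Qed.

Lemma tup_in_mono {X} (P Q : X -> Prop) m :
  (forall x, P x -> Q x) -> forall t, tup_in P m t -> tup_in Q m t.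
Proof.
  induction m; simpl; intros; auto. destruct H0; split; auto.
Qed.

Lemma list_max_in (l : list nat) k : In k l -> (k <= fold_right max 0%nat l)%nat.
Proof. induction l; simpl; intros; [contradiction|]. destruct H; subst; [lia|]. specialize (IHl H); lia. Qed.

Lemma inv_small eps : 0 < eps -> exists k : nat, / (INR k + 1) < eps.
Proof.
  intros. destruct (archimed_cor1 eps H) as [N [H1 H2]]. exists N.
  eapply Rle_lt_trans; [|exact H1]. apply Rinv_le_contravar.
  apply lt_0_INR; lia. lra.
Qed.

Lemma ball_open {X} (d : X -> X -> R) (Hm : is_metric d) c r :
  Defs.open_set d (fun x => d c x < r).
Proof.
  destruct Hm as [Hnn [Heq [Hs Ht]]]. intros x Hx. exists (r - d c x). split. lra.
  intros y Hy. specialize (Ht c x y). lra.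
Qed.

Lemma compact_bounded {X} (d : X -> X -> R) (Hm : is_metric d) K :
  mcompact d K -> forall c, exists M, forall x, K x -> d c x <= M.
Proof.
  intros HK c.
  destruct (HK nat (fun k x => d c x < INR k)) as [l Hl].
  - intros. apply ball_open; auto.
  - intros x _. destruct (INR_unbounded (d c x)) as [k Hk]. exists k. lra.
  - exists (INR (fold_right max 0%nat l)). intros x Hx. destruct (Hl x Hx) as [i [Hi Hi2]].
    apply list_max_in in Hi. apply le_INR in Hi. lra.
Qed.

Definition closed_set {X} (d : X -> X -> R) (S : X -> Prop) : Prop :=
  forall y, ~ S y -> exists r, 0 < r /\ forall z, d y z < r -> ~ S z.

Lemma closed_sub_compact {X} (d : X -> X -> R) K S :
  mcompact d K -> (forall x, S x -> K x) -> closed_set d S -> mcompact d S.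
Proof.
  intros HK HSK HS I U HU Hcov.
  destruct (HK (option I) (fun o x => match o with Some i => U i x | None => ~ S x end)) as [l Hl].
  - intros [i|]; auto.
  - intros x Kx. destruct (classic (S x)) as [Sx|nSx].
    + destruct (Hcov x Sx) as [i Hi]. exists (Some i); auto.
    + exists None; auto.
  - exists (flat_map (fun o => match o with Some i => i :: nil | None => nil end) l).
    intros x Sx. destruct (Hl x (HSK x Sx)) as [[i|] [Hi Hi2]].
    + exists i. split; auto. apply in_flat_map. exists (Some i). simpl; auto.
    + contradiction.
Qed.

Lemma nearest {X} (d : X -> X -> R) (Hm : is_metric d) S :
  mcompact d S -> nonempty S -> forall y, exists a, S a /\ forall b, S b -> d y a <= d y b.
Proof.
  intros HS [s0 Hs0] y. pose proof Hm as [Hnn [Heq [Hs Ht]]].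
  set (E := fun r => exists b, S b /\ r = - d y b).
  destruct (completeness E) as [L [HL1 HL2]].
  - exists 0. intros r [b [_ ->]]. specialize (Hnn y b). lra.
  - exists (- d y s0). exists s0; auto.
  - apply NNPP; intro Hno.
    assert (Hgt : forall a, S a -> - L < d y a).
    { intros a Sa. assert (- d y a <= L) by (apply HL1; exists a; auto).
      destruct (Rle_lt_or_eq_dec _ _ H); [lra|]. exfalso; apply Hno. exists a; split; auto.
      intros b Sb. assert (- d y b <= L) by (apply HL1; exists b; auto). lra. }
    destruct (HS nat (fun k z => - L + / (INR k + 1) < d y z)) as [l Hl].
    + intros k z Hz. exists (d y z - (- L + / (INR k + 1))). split. lra.
      intros w Hw. specialize (Ht y w z). rewrite (Hs w z) in Ht. lra.
    + intros a Sa. destruct (inv_small (d y a - - L)) as [k Hk]. specialize (Hgt a Sa); lra.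
      exists k. lra.
    + set (K0 := fold_right max 0%nat l).
      assert (Hpos : 0 < / (INR K0 + 1)). { apply Rinv_0_lt_compat. pose proof (pos_INR K0). lra. }
      assert (L <= L - / (INR K0 + 1)).
      { apply HL2. intros r [b [Sb ->]]. destruct (Hl b Sb) as [k [Hk Hk2]].
        apply list_max_in in Hk. apply le_INR in Hk.
        assert (/ (INR K0 + 1) <= / (INR k + 1)). { apply Rinv_le_contravar. pose proof (pos_INR k); lra. fold K0 in Hk; lra. }
        fold K0 in Hk. lra. }
      lra.
Qed.

Lemma varphi_lt (varphi : R -> R) :
  (forall t, 0 <= t -> 0 <= varphi t) ->
  (forall s t, 0 <= s -> s <= t -> varphi s <= varphi t) ->
  (forall t, 0 < t -> Un_cv (fun k => Nat.iter k varphi t) 0) ->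
  forall t, 0 < t -> varphi t < t.
Proof.
  intros H0 Hmono Hcv t Ht. destruct (Rlt_or_le (varphi t) t) as [|Hge]; auto. exfalso.
  assert (Hk : forall k, t <= Nat.iter k varphi t).
  { induction k; simpl. lra. eapply Rle_trans; [exact Hge|]. apply Hmono; lra. }
  destruct (Hcv t Ht t Ht) as [N HN]. specialize (HN N (le_n N)). unfold Rdist in HN.
  rewrite Rminus_0_r in HN. specialize (Hk N). pose proof (Rle_abs (Nat.iter N varphi t)). lra.
Qed.

Lemma contr_unif {X} (d : X -> X -> R) (Hm : is_metric d) m n phi :
  matkowski_GIFS d m n phi -> forall D, 0 < D -> exists c, c < D /\
    forall j, (j < n)%nat -> forall x y, dmax d m x y <= D -> d (phi j x) (phi j y) <= c.
Proof.
  intros HG D HD.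
  assert (forall k, (k <= n)%nat -> exists c, c < D /\
    forall j, (j < k)%nat -> forall x y, dmax d m x y <= D -> d (phi j x) (phi j y) <= c).
  { induction k; intros Hk.
    - exists 0. split; auto. intros; lia.
    - destruct IHk as [c [Hc1 Hc2]]; [lia|].
      destruct (HG k ltac:(lia)) as [_ [vp [Hv0 [Hvm [Hvc Hvd]]]]].
      pose proof (varphi_lt vp Hv0 Hvm Hvc D HD).
      exists (Rmax c (vp D)). split. apply Rmax_lub_lt; auto.
      intros j Hj x y Hxy. destruct (Nat.eq_dec j k).
      + subst. eapply Rle_trans; [apply Hvd|]. eapply Rle_trans; [|apply Rmax_r].
        apply Hvm; auto. apply dmax_nonneg; auto.
      + eapply Rle_trans; [apply Hc2; auto; lia|apply Rmax_l]. }
  apply (H n (le_n n)).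
Qed.

Lemma tup_near {X} (d : X -> X -> R) m (P Q : X -> Prop) D :
  0 <= D -> (forall y, P y -> exists a, Q a /\ d y a <= D) ->
  forall t, tup_in P m t -> exists s, tup_in Q m s /\ dmax d m t s <= D.
Proof.
  intros HD H. induction m; simpl; intros t Ht.
  - exists tt. split; auto.
  - destruct Ht as [H1 H2]. destruct (H _ H1) as [a [Ha Ha2]]. destruct (IHm _ H2) as [s [Hs Hs2]].
    exists (a, s). simpl. split; auto. apply Rmax_lub; auto.
Qed.

Lemma core {X} (d : X -> X -> R) (Hm : is_metric d) m n (phi : nat -> tup X m -> X)
  (P : Type) (S1 S2 : P -> X -> Prop) :
  (forall D, 0 < D -> exists c, c < D /\
    forall j, (j < n)%nat -> forall x y, dmax d m x y <= D -> d (phi j x) (phi j y) <= c) ->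
  (forall p x, S1 p x -> exists j t q, (j < n)%nat /\ phi j t = x /\ tup_in (S1 q) m t /\
      (forall s, tup_in (S2 q) m s -> S2 p (phi j s))) ->
  (forall p, (exists x, S1 p x) -> forall y, exists a, S2 p a /\ forall b, S2 p b -> d y a <= d y b) ->
  (exists M, forall p x a, S1 p x -> S2 p a -> d x a <= M) ->
  forall p x, S1 p x -> S2 p x.
Proof.
  intros Hc H1 Hnear [M HM] p x Hx. pose proof Hm as [Hnn [Heq [Hs Ht]]].
  destruct (Hnear p (ex_intro _ x Hx) x) as [a [Ha Hmin]].
  set (E := fun r => exists p x a, S1 p x /\ S2 p a /\ (forall b, S2 p b -> d x a <= d x b) /\ r = d x a).
  destruct (completeness E) as [D [HD1 HD2]].
  - exists M. intros r (p' & x' & a' & H1' & H2' & _ & ->). eauto.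
  - exists (d x a). exists p, x, a. auto.
  - assert (HxD : d x a <= D) by (apply HD1; exists p, x, a; auto).
    assert (D <= 0).
    { destruct (Rle_or_lt D 0) as [|HDp]; auto. exfalso.
      destruct (Hc D HDp) as [c [Hc1 Hc2]].
      assert (D <= c); [|lra].
      apply HD2. intros r (p' & x' & a' & Hx' & Ha' & Hmin' & ->).
      destruct (H1 p' x' Hx') as (j & t & q & Hj & Hjt & Ht1 & Ht2).
      destruct (tup_near d m (S1 q) (S2 q) D ltac:(lra)) with (t := t) as [s [Hs1 Hs2]]; auto.
      { intros y Hy. destruct (Hnear q (ex_intro _ y Hy) y) as [a'' [Ha'' Hmin'']].
        exists a''. split; auto. apply HD1. exists q, y, a''. auto. }
      eapply Rle_trans; [apply Hmin'; apply Ht2; exact Hs1|]. rewrite <- Hjt. apply Hc2; auto. }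
    assert (Hz : d x a = 0) by (specialize (Hnn x a); lra). apply Heq in Hz. subst; auto.
Qed.

Definition incr (s : nat -> nat) := forall n, (s n < s (S n))%nat.

Lemma incr_lt s : incr s -> forall a b, (a < b)%nat -> (s a < s b)%nat.
Proof.
  intros Hs a b Hab. induction b. lia. destruct (Nat.eq_dec a b). subst; apply Hs.
  specialize (IHb ltac:(lia)). specialize (Hs b). lia.
Qed.

Lemma incr_ge s : incr s -> forall n, (n <= s n)%nat.
Proof. intros Hs n. induction n. lia. specialize (Hs n). lia. Qed.

Lemma seq_cluster {X} (d : X -> X -> R) (Hm : is_metric d) K (a : nat -> X) :
  mcompact d K -> (forall n, K (a n)) ->
  exists c, forall eps, 0 < eps -> forall N, exists k, (N <= k)%nat /\ d c (a k) < eps.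
Proof.
  intros HK Ha. apply NNPP; intro Hno.
  assert (Hc : forall c, exists eps, 0 < eps /\ exists N, forall k, (N <= k)%nat -> eps <= d c (a k)).
  { intros c. apply NNPP; intro H2. apply Hno. exists c. intros eps Heps N.
    apply NNPP; intro H3. apply H2. exists eps. split; auto. exists N. intros k Hk.
    destruct (Rlt_or_le (d c (a k)) eps); auto. exfalso; apply H3; exists k; auto. }
  set (I := {p : X * R | 0 < snd p /\ exists N, forall k, (N <= k)%nat -> snd p <= d (fst p) (a k)}).
  destruct (HK I (fun p x => d (fst (proj1_sig p)) x < snd (proj1_sig p))) as [l Hl].
  - intros p. apply ball_open; auto.
  - intros x _. destruct (Hc x) as [eps [He HN]].
    exists (exist _ (x, eps) (conj He HN)). simpl. destruct Hm as [_ [Heq _]].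
    replace (d x x) with 0. auto. symmetry; apply Heq; auto.
  - assert (HL : forall l : list I, exists N, forall p, In p l -> forall k, (N <= k)%nat ->
        snd (proj1_sig p) <= d (fst (proj1_sig p)) (a k)).
    { induction l0. exists 0%nat. intros p []. destruct IHl0 as [N1 HN1].
      destruct (proj2 (proj2_sig a0)) as [N2 HN2]. exists (max N1 N2). intros p [<-|Hp] k Hk.
      apply HN2; lia. apply HN1; auto; lia. }
    destruct (HL l) as [N HN]. destruct (Hl (a N) (Ha N)) as [p [Hp Hp2]].
    specialize (HN p Hp N (le_n N)). lra.
Qed.

Definition pick {X} (d : X -> X -> R) c (a : nat -> X) N e :=
  epsilon (inhabits 0%nat) (fun k => (N <= k)%nat /\ d c (a k) < e).

Fixpoint sq {X} (d : X -> X -> R) c (a : nat -> X) n :=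
  match n with
  | O => pick d c a 0 1
  | S n' => pick d c a (S (sq d c a n')) (/ (INR (S n') + 1))
  end.

Lemma seq_compact {X} (d : X -> X -> R) (Hm : is_metric d) K (a : nat -> X) :
  mcompact d K -> (forall n, K (a n)) ->
  exists s, incr s /\ exists c, converges_to d (fun n => a (s n)) c.
Proof.
  intros HK Ha. destruct (seq_cluster d Hm K a HK Ha) as [c Hc].
  assert (Hp : forall N e, 0 < e -> (N <= pick d c a N e)%nat /\ d c (a (pick d c a N e)) < e).
  { intros N e He. unfold pick. apply epsilon_spec. apply Hc; auto. }
  assert (Hpos : forall n, 0 < / (INR n + 1)).
  { intros; apply Rinv_0_lt_compat; pose proof (pos_INR n); lra. }
  assert (Hsq : forall n, d c (a (sq d c a n)) < / (INR n + 1)).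
  { destruct n. simpl. replace (/ (0 + 1)) with 1 by field. apply Hp; lra.
    apply Hp. apply (Hpos (S n)). }
  exists (sq d c a). split.
  - intros n. change (sq d c a (S n)) with (pick d c a (S (sq d c a n)) (/ (INR (S n) + 1))). pose proof (proj1 (Hp (S (sq d c a n)) _ (Hpos (S n)))). lia.
  - exists c. intros eps Heps. destruct (inv_small eps Heps) as [N HN]. exists N.
    intros p Hp'. destruct Hm as [_ [_ [Hs _]]]. rewrite Hs.
    eapply Rlt_le_trans; [apply Hsq|]. apply Rlt_le in HN. eapply Rle_trans; [|exact HN].
    apply Rinv_le_contravar. pose proof (pos_INR N); lra. apply le_INR in Hp'. lra.
Qed.

Lemma seq_compact_tup {X} (d : X -> X -> R) (Hm : is_metric d) K m :
  mcompact d K -> forall (a : nat -> tup X m), (forall n, tup_in K m (a n)) ->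
  exists s, incr s /\ exists c, converges_to (dmax d m) (fun n => a (s n)) c.
Proof.
  intros HK. induction m; intros a Ha.
  - exists (fun n => n). split. intros n; lia. exists tt. intros eps Heps. exists 0%nat. intros; simpl; lra.
  - destruct (seq_compact d Hm K (fun n => fst (a n)) HK (fun n => proj1 (Ha n))) as [s1 [Hs1 [c1 Hc1]]].
    destruct (IHm (fun n => snd (a (s1 n))) (fun n => proj2 (Ha (s1 n)))) as [s2 [Hs2 [c2 Hc2]]].
    exists (fun n => s1 (s2 n)). split.
    + intros n. apply incr_lt; auto.
    + exists (c1, c2). intros eps Heps. destruct (Hc1 eps Heps) as [N1 HN1].
      destruct (Hc2 eps Heps) as [N2 HN2]. exists (max N1 N2). intros p Hp. simpl.
      apply Rmax_lub_lt. apply HN1. pose proof (incr_ge s2 Hs2 p); lia. apply HN2; lia.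
Qed.

Lemma Rsup_spec E : (exists r, E r) -> bound E -> is_lub E (Rsup E).
Proof.
  intros H1 H2. unfold Rsup. apply epsilon_spec. destruct (completeness E H2 H1) as [l Hl]. eauto.
Qed.

Lemma zadeh_ge {Z Y} (T : Z -> Y) (u : Z -> R) z0 :
  (forall z, u z <= 1) -> u z0 <= zadeh T u (T z0).
Proof.
  intros Hu. unfold zadeh. destruct excluded_middle_informative as [He|He].
  - apply Rsup_spec. eauto. exists 1. intros r [z [_ ->]]; auto. exists z0; auto.
  - exfalso; apply He; eauto.
Qed.

Lemma zadeh_range {Z Y} (T : Z -> Y) (u : Z -> R) y :
  (forall z, 0 <= u z <= 1) -> 0 <= zadeh T u y <= 1.
Proof.
  intros Hu. unfold zadeh. destruct excluded_middle_informative as [[z0 Hz0]|He]; [|lra].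
  assert (Hl : is_lub (fun r => exists z, T z = y /\ r = u z) (Rsup (fun r => exists z, T z = y /\ r = u z))).
  { apply Rsup_spec. eauto. exists 1. intros r [z [_ ->]]; apply Hu. }
  destruct Hl as [H1 H2]. split.
  - eapply Rle_trans; [|apply H1; exists z0; eauto]. apply Hu.
  - apply H2. intros r [z [_ ->]]; apply Hu.
Qed.

Lemma zadeh_pos {Z Y} (T : Z -> Y) (u : Z -> R) y :
  (forall z, 0 <= u z <= 1) -> 0 < zadeh T u y ->
  is_lub (fun r => exists z, T z = y /\ r = u z) (zadeh T u y).
Proof.
  intros Hu Hp. unfold zadeh in *. destruct excluded_middle_informative as [[z0 Hz0]|He]; [|lra].
  apply Rsup_spec. eauto. exists 1. intros r [z [_ ->]]; apply Hu.
Qed.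

Lemma fprod_range {X} (w : X -> R) m : fuzzy w -> forall t, 0 <= fprod_diag w m t <= 1.
Proof.
  intros Hw. induction m; simpl; intros. lra. destruct t as [t1 t2]. simpl. specialize (IHm t2). specialize (Hw t1).
  split. apply Rmin_glb; lra. eapply Rle_trans; [apply Rmin_r|lra].
Qed.

Lemma fprod_ge {X} (w : X -> R) m z t : z <= fprod_diag w m t -> tup_in (fun y => z <= w y) m t.
Proof.
  induction m; simpl; intros; auto. split.
  eapply Rle_trans; [exact H|apply Rmin_l]. apply IHm. eapply Rle_trans; [exact H|apply Rmin_r].
Qed.

Lemma fprod_le {X} (w : X -> R) m z t : z <= 1 -> tup_in (fun y => z <= w y) m t -> z <= fprod_diag w m t.
Proof.
  induction m; simpl; intros; auto. destruct H0. apply Rmin_glb; auto.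
Qed.

Lemma fprod_usc {X} (d : X -> X -> R) (w : X -> R) m : usc d w ->
  forall t eps, 0 < eps -> exists delta, 0 < delta /\ forall s, dmax d m t s < delta ->
    fprod_diag w m s < fprod_diag w m t + eps.
Proof.
  intros Hw. induction m; simpl; intros t eps He.
  - exists 1. split. lra. intros; lra.
  - destruct t as [t1 t2]. simpl.
    destruct (Hw t1 eps He) as [d1 [Hd1 H1]]. destruct (IHm t2 eps He) as [d2 [Hd2 H2]].
    exists (Rmin d1 d2). split. apply Rmin_glb_lt; auto. intros [s1 s2] Hs. simpl in Hs |- *.
    assert (A1 : d t1 s1 < d1) by (eapply Rle_lt_trans; [apply Rmax_l|]; eapply Rlt_le_trans; [exact Hs|apply Rmin_l]).
    assert (A2 : dmax d m t2 s2 < d2) by (eapply Rle_lt_trans; [apply Rmax_r|]; eapply Rlt_le_trans; [exact Hs|apply Rmin_r]).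
    specialize (H1 _ A1). specialize (H2 _ A2).
    unfold Rmin at 2. destruct Rle_dec.
    + eapply Rle_lt_trans; [apply Rmin_l|lra].
    + eapply Rle_lt_trans; [apply Rmin_r|lra].
Qed.

Lemma in_support {X} (d : X -> X -> R) (Hm : is_metric d) (w : X -> R) y : 0 < w y -> fsupport d w y.
Proof.
  intros H eps He. exists y. split; auto. destruct Hm as [_ [Heq _]].
  replace (d y y) with 0; auto. symmetry; apply Heq; auto.
Qed.

Lemma attain {X} (d : X -> X -> R) (Hm : is_metric d) (w : X -> R) m (psi : tup X m -> X) :
  fuzzy w -> usc d w -> mcompact d (fsupport d w) -> continuous_m d m psi ->
  forall x z, is_lub (fun r => exists t, psi t = x /\ r = fprod_diag w m t) z -> 0 < z ->
  exists t, psi t = x /\ z <= fprod_diag w m t.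
Proof.
  intros Hf Hu HK Hc x z [Hl1 Hl2] Hz.
  assert (Hex : forall k : nat, exists t, psi t = x /\ Rmax (z/2) (z - / (INR k + 1)) < fprod_diag w m t).
  { intros k. assert (Hb : Rmax (z/2) (z - / (INR k + 1)) < z).
    { apply Rmax_lub_lt. lra. assert (0 < / (INR k + 1)) by (apply Rinv_0_lt_compat; pose proof (pos_INR k); lra). lra. }
    apply NNPP; intro Hno. assert (z <= Rmax (z/2) (z - / (INR k + 1))); [|lra].
    apply Hl2. intros r [t [Ht ->]]. destruct (Rle_or_lt (fprod_diag w m t) (Rmax (z / 2) (z - / (INR k + 1)))); auto.
    exfalso; apply Hno; eauto. }
  destruct (Hex 0%nat) as [t0 _].
  set (tk := fun k => epsilon (inhabits t0) (fun t => psi t = x /\ Rmax (z/2) (z - / (INR k + 1)) < fprod_diag w m t)).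
  assert (Htk : forall k, psi (tk k) = x /\ Rmax (z/2) (z - / (INR k + 1)) < fprod_diag w m (tk k)).
  { intros k. unfold tk. apply epsilon_spec. apply Hex. }
  assert (Hin : forall k, tup_in (fsupport d w) m (tk k)).
  { intros k. apply tup_in_mono with (P := fun y => z/2 <= w y).
    intros y Hy. apply in_support; auto; lra.
    apply fprod_ge. destruct (Htk k) as [_ H]. pose proof (Rmax_l (z/2) (z - / (INR k + 1))). lra. }
  destruct (seq_compact_tup d Hm _ m HK tk Hin) as [s [Hs [ts Hts]]].
  pose proof Hm as [Hnn [Heq [Hsy _]]].
  exists ts. split.
  - apply Heq. apply NNPP; intro Hne.
    assert (Hp : 0 < d (psi ts) x) by (pose proof (Hnn (psi ts) x); lra).
    destruct (Hc ts _ Hp) as [del [Hdel Hdel2]]. destruct (Hts del Hdel) as [N HN].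
    specialize (HN N (le_n N)). rewrite dmax_sym in HN; auto. specialize (Hdel2 _ HN).
    rewrite (proj1 (Htk (s N))) in Hdel2. lra.
  - destruct (Rle_or_lt z (fprod_diag w m ts)) as [|Hlt]; auto. exfalso.
    set (eps := (z - fprod_diag w m ts) / 3).
    assert (He : 0 < eps) by (unfold eps; lra).
    destruct (fprod_usc d w m Hu ts eps He) as [del [Hdel Hdel2]].
    destruct (inv_small eps He) as [k0 Hk0]. destruct (Hts del Hdel) as [N HN].
    set (p := max N k0). specialize (HN p ltac:(lia)). rewrite dmax_sym in HN; auto.
    specialize (Hdel2 _ HN). destruct (Htk (s p)) as [_ H].
    pose proof (Rmax_r (z/2) (z - / (INR (s p) + 1))).
    assert (/ (INR (s p) + 1) <= / (INR k0 + 1)).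
    { apply Rinv_le_contravar. pose proof (pos_INR k0); lra.
      assert (k0 <= s p)%nat by (pose proof (incr_ge s Hs p); lia). apply le_INR in H1. lra. }
    unfold eps in *. lra.
Qed.

Lemma bigmax_ge {X} k (f : nat -> X -> R) x j : (j < k)%nat -> f j x <= bigmax k f x.
Proof.
  induction k; simpl; intros. lia. destruct (Nat.eq_dec j k). subst; apply Rmax_r.
  eapply Rle_trans; [apply IHk; lia|apply Rmax_l].
Qed.

Lemma bigmax_ex {X} k (f : nat -> X -> R) x a : 0 < a -> a <= bigmax k f x -> exists j, (j < k)%nat /\ a <= f j x.
Proof.
  induction k; simpl; intros. lra. unfold Rmax in H0. destruct Rle_dec.
  exists k; split; auto. destruct (IHk H H0) as [j [Hj Hj2]]. exists j; split; auto.
Qed.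

Lemma fuzzy_le {X} (d : X -> X -> R) (Hm : is_metric d) m n phi rho (w1 w2 : X -> R) :
  (1 <= m)%nat -> matkowski_GIFS d m n phi -> admissible n rho -> FX_star d w1 -> FX_star d w2 ->
  fle w1 (Zop m n phi rho w1) -> fle (Zop m n phi rho w2) w2 -> fle w1 w2.
Proof.
  intros Hm1 HG [Hadm _] [Hf1 [[x1 Hx1] [Hu1 HK1]]] [Hf2 [[x2 Hx2] [Hu2 HK2]]] HZ1 HZ2.
  pose proof Hm as [Hnn [Heq [Hsy Htr]]].
  assert (Hcore : forall p x, (fun p x => 0 < p /\ p <= 1 /\ p <= w1 x) p x -> (fun p x => p <= w2 x) p x).
  { apply (core d Hm m n phi R).
    - apply contr_unif; auto.
    - intros p x [Hp0 [Hp1 Hpx]].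
      assert (Hz : p <= Zop m n phi rho w1 x) by (eapply Rle_trans; [exact Hpx|apply HZ1]).
      unfold Zop in Hz. destruct (bigmax_ex _ _ _ _ Hp0 Hz) as [j [Hj Hrj]].
      destruct (Hadm j Hj) as [Hr01 [Hrmono [_ Hr0]]].
      set (z := zadeh (phi j) (fprod_diag w1 m) x) in *.
      assert (Hzr : 0 <= z <= 1) by (apply zadeh_range; apply fprod_range; auto).
      assert (Hzp : 0 < z).
      { destruct (Rle_lt_or_eq_dec 0 z (proj1 Hzr)) as [|He]; auto. rewrite <- He, Hr0 in Hrj. lra. }
      pose proof (zadeh_pos (phi j) (fprod_diag w1 m) x (fprod_range w1 m Hf1) Hzp) as Hlub.
      destruct (attain d Hm w1 m (phi j) Hf1 Hu1 HK1 (proj1 (HG j Hj)) x z Hlub Hzp) as [t [Ht1 Ht2]].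
      exists j, t, z. split; auto. split; auto. split.
      + apply tup_in_mono with (P := fun y => z <= w1 y). intros; repeat split; lra.
        apply fprod_ge; auto.
      + intros s Hs. eapply Rle_trans; [|apply HZ2]. unfold Zop.
        eapply Rle_trans; [|apply (bigmax_ge n _ _ j Hj)]. simpl.
        assert (E1 : z <= fprod_diag w2 m s) by (apply fprod_le; [lra|exact Hs]).
        assert (E2 : fprod_diag w2 m s <= zadeh (phi j) (fprod_diag w2 m) (phi j s))
          by (apply zadeh_ge; apply fprod_range; auto).
        pose proof (zadeh_range (phi j) (fprod_diag w2 m) (phi j s) (fprod_range w2 m Hf2)).
        eapply Rle_trans; [exact Hrj|]. apply Hrmono; lra.
    - intros p [x [Hp0 [Hp1 _]]] y. apply nearest; auto.
      + apply closed_sub_compact with (K := fsupport d w2); auto.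
        * intros a Ha. apply in_support; auto; lra.
        * intros a Ha. assert (w2 a < p) by lra. destruct (Hu2 a (p - w2 a) ltac:(lra)) as [r [Hr Hr2]].
          exists r; split; auto. intros b Hb. specialize (Hr2 b Hb). lra.
      + exists x2. lra.
    - destruct (compact_bounded d Hm _ HK1 x1) as [R1 HR1].
      destruct (compact_bounded d Hm _ HK2 x1) as [R2 HR2].
      exists (R1 + R2). intros p x a [Hp0 [Hp1 Hpx]] Hpa.
      pose proof (HR1 x (in_support d Hm w1 x ltac:(lra))).
      pose proof (HR2 a (in_support d Hm w2 a ltac:(lra))).
      specialize (Htr x x1 a). rewrite (Hsy x x1) in Htr. lra. }
  intros x. destruct (Rle_or_lt (w1 x) 0). specialize (Hf2 x); lra.
  apply (Hcore (w1 x) x). specialize (Hf1 x). repeat split; lra.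
Qed.

Lemma crisp_le {X} (d : X -> X -> R) (Hm : is_metric d) m n phi (K1 K2 : X -> Prop) :
  matkowski_GIFS d m n phi -> mcompact d K1 -> nonempty K1 -> mcompact d K2 -> nonempty K2 ->
  (forall x, K1 x -> hutchinson m n phi K1 x) ->
  (forall j t, (j < n)%nat -> tup_in K2 m t -> K2 (phi j t)) -> forall x, K1 x -> K2 x.
Proof.
  intros HG HK1 [x1 Hx1] HK2 HnK2 Hh Hcl.
  pose proof Hm as [Hnn [Heq [Hsy Htr]]].
  intros x Hx. refine (core d Hm m n phi unit (fun _ => K1) (fun _ => K2) _ _ _ _ tt x Hx).
  - apply contr_unif; auto.
  - intros _ y Hy. destruct (Hh y Hy) as [j [t [Hj [Ht Hjt]]]]. exists j, t, tt. auto.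
  - intros _ _ y. apply nearest; auto.
  - destruct (compact_bounded d Hm _ HK1 x1) as [R1 HR1].
    destruct (compact_bounded d Hm _ HK2 x1) as [R2 HR2].
    exists (R1 + R2). intros _ y a Hy Ha. pose proof (HR1 y Hy). pose proof (HR2 a Ha).
    specialize (Htr y x1 a). rewrite (Hsy y x1) in Htr. lra.
Qed.

Theorem mainTheorem15
  (X : Type) (d : X -> X -> R) (m n : nat)
  (phi : nat -> tup X m -> X) (rho : nat -> R -> R)
  (A : X -> Prop) (u : X -> R) :
  is_metric d -> mcomplete d -> (1 <= m)%nat ->
  matkowski_GIFS d m n phi ->
  admissible n rho ->
  is_attractor d m n phi A ->
  is_fuzzy_attractor d m n phi rho u ->
  forall (B : X -> Prop) (v : X -> R),
    nonempty B -> mcompact d B -> FX_star d v ->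
    (fle (Zop m n phi rho v) v -> fle u v) /\
    ((forall x, hutchinson m n phi B x -> B x) -> forall x, A x -> B x) /\
    (fle v (Zop m n phi rho v) -> fle v u) /\
    ((forall x, B x -> hutchinson m n phi B x) -> forall x, B x -> A x).
Proof.
  intros Hm _ Hm1 HG Hadm [HAne [HAc HAh]] [Hu HZu] B v HBne HBc Hv.
  repeat split.
  - intros H. apply (fuzzy_le d Hm m n phi rho); auto. rewrite HZu. intro; lra.
  - intros H. apply (crisp_le d Hm m n phi); auto.
    + intros x Hx. apply HAh; auto.
    + intros j t Hj Ht. apply H. exists j, t. auto.
  - intros H. apply (fuzzy_le d Hm m n phi rho); auto. rewrite HZu. intro; lra.
  - intros H. apply (crisp_le d Hm m n phi); auto.
    intros j t Hj Ht. apply HAh. exists j, t. auto.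
Qed.
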